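(* Let $\hat G=(\hat V,\hat E,w)$ be a weighted graph admitting a valid partition, and let $\mathcal{C}=\{C_1,\dots,C_m\}$ ($m>1$) be the minimal valid partition of $\hat V$. Suppose there is a claw w.r.t. $\mathcal{C}$, say $\{y_m\mid y_1,y_2,y_3\}$ with $y_i\in C_i$ for $i\in\{1,2,3,m\}$ (after relabeling clusters). For each $i\in[4,m-1]$ fix an arbitrary representative $y_i\in C_i$, let $V'=\{y_1,\dots,y_m\}$, and let $\mathsf{w}=w(y_1,y_m)=w(y_2,y_m)=w(y_3,y_m)$. Call a pair $\{y_a,y_b\}\subseteq V'$ light if $w(y_a,y_b)<\mathsf{w}$. Let $\mathsf{C}\subseteq V'$ be a maximum clique in the graph on $V'$ whose edges are the light pairs, among cliques containing $y_1,y_2,y_3$. For each $y_i\in\mathsf{C}$ let $\Pi_i=(C_i,\ \bigcup_{\ell\ne i}C_\ell)$. Then $\hat G$ has a valid bi-partition if and only if $\Pi_i$ is valid for some $y_i\in\mathsf{C}$.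
   Context: Weights are symmetric, nonnegative, $0$ for non-edges. A partition $\mathcal{S}=(S_1,\dots,S_t)$, $t>1$, of $\hat V$ into nonempty disjoint sets is valid w.r.t. $\hat G$ if (i) for every triple of distinct vertices $v_i,v_j,v_k$ with $w_{ij}>\max\{w_{ik},w_{jk}\}$, either all three lie in the same part, or $v_i,v_j$ lie in one part and $v_k$ in another; and (ii) for every triple with $w_{ij}=w_{ik}>w_{jk}$, it is not the case that $v_j,v_k$ lie in the same part while $v_i$ lies in a different part. A valid bi-partition is a valid partition with two parts. The minimal valid partition is a valid partition $\mathcal{C}$ that refines every valid partition (each part of $\mathcal{C}$ is contained in some part of any other valid partition); it exists whenever a valid partition exists. Four vertices $\{v_i\mid v_j,v_k,v_\ell\}$ form a claw w.r.t. $\mathcal{C}$ if they lie in four different parts of $\mathcal{C}$ and $w_{ij}=w_{ik}=w_{i\ell}>\max\{w_{jk},w_{j\ell},w_{k\ell}\}$. *)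

(* Defs.v *)
From HB Require Import structures.
From mathcomp Require Import all_boot all_order all_algebra.
Set Implicit Arguments. Unset Strict Implicit. Unset Printing Implicit Defensive.
Import Order.TTheory GRing.Theory Num.Theory.
Local Open Scope ring_scope.

Definition same_part (V : finType) (P : {set {set V}}) (x y : V) : bool :=
  pblock P x == pblock P y.

Definition valid_partition (R : realDomainType) (V : finType)
    (w : V -> V -> R) (P : {set {set V}}) : Prop :=
  [/\ partition P [set: V], (1 < #|P|)%N,
      (forall i j k : V, i != j -> i != k -> j != k ->
         w i j > Num.max (w i k) (w j k) ->
         (same_part P i j && same_part P j k)
         || (same_part P i j && ~~ same_part P i k))
    & (forall i j k : V, i != j -> i != k -> j != k ->
         w i j = w i k -> w i k > w j k ->
         ~ (same_part P j k && ~~ same_part P i j))].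

Definition valid_bipartition (R : realDomainType) (V : finType)
    (w : V -> V -> R) (P : {set {set V}}) : Prop :=
  valid_partition w P /\ #|P| = 2%N.

Definition refines (V : finType) (C P : {set {set V}}) : Prop :=
  forall A, A \in C -> exists2 B, B \in P & A \subset B.

Definition minimal_valid_partition (R : realDomainType) (V : finType)
    (w : V -> V -> R) (C : {set {set V}}) : Prop :=
  valid_partition w C /\ (forall P, valid_partition w P -> refines C P).

Definition claw (R : realDomainType) (V : finType) (w : V -> V -> R)
    (C : {set {set V}}) (ym y1 y2 y3 : V) : Prop :=
  uniq [:: pblock C ym; pblock C y1; pblock C y2; pblock C y3] /\
  w ym y1 = w ym y2 /\ w ym y2 = w ym y3 /\
  w ym y1 > Num.max (w y1 y2) (Num.max (w y1 y3) (w y2 y3)).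

Definition light_clique (R : realDomainType) (V : finType) (w : V -> V -> R)
    (ww : R) (V' : {set V}) (y1 y2 y3 : V) (K : {set V}) : Prop :=
  [/\ K \subset V', y1 \in K, y2 \in K, y3 \in K
    & forall a b, a \in K -> b \in K -> a != b -> w a b < ww].

(* Main.v *)
Require Import Defs.
From HB Require Import structures.
From mathcomp Require Import all_boot all_order all_algebra.
Import Order.TTheory GRing.Theory Num.Theory.
Local Open Scope ring_scope.
Set Implicit Arguments. Unset Strict Implicit.

Lemma sp_trans (V : finType) (P : {set {set V}}) x y z :
  same_part P x y -> same_part P y z -> same_part P x z.
Proof. by rewrite /same_part => /eqP -> /eqP ->. Qed.

Lemma sp_sym (V : finType) (P : {set {set V}}) x y :
  same_part P x y = same_part P y x.
Proof. by rewrite /same_part eq_sym. Qed.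

Lemma sp_refl (V : finType) (P : {set {set V}}) x : same_part P x x.
Proof. by rewrite /same_part. Qed.

Lemma valid_ultra (R : realDomainType) (V : finType) (w : V -> V -> R)
  (w_sym : forall x y, w x y = w y x) P :
  valid_partition w P -> forall i j k, i != j -> i != k -> j != k ->
  same_part P j k -> ~~ same_part P i j -> w i j <= w j k.
Proof.
case=> _ _ h1 h2 i j k nij nik njk sjk nsij.
rewrite leNgt; apply/negP => lt.
have nsik : ~~ same_part P i k.
  apply/negP => sik; move/negP: nsij; apply.
  by apply: sp_trans sik _; rewrite sp_sym.
case: (ltrgtP (w i j) (w i k)) => c.
- have nkj : k != j by rewrite eq_sym.
  have := h1 i k j nik nij nkj.
  rewrite gt_max c (w_sym k j) (lt_trans lt c) => /(_ isT).
  by rewrite (negbTE nsik).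
- have := h1 i j k nij nik njk; rewrite gt_max c lt => /(_ isT).
  by rewrite (negbTE nsij).
- by have := h2 i j k nij nik njk c; rewrite -c lt => /(_ isT); rewrite sjk nsij.
Qed.

Lemma in_own (V : finType) (P : {set {set V}}) x :
  partition P [set: V] -> x \in pblock P x.
Proof. by move=> hP; rewrite mem_pblock (cover_partition hP) inE. Qed.

Lemma own_mem (V : finType) (P : {set {set V}}) x :
  partition P [set: V] -> pblock P x \in P.
Proof. by move=> hP; apply: pblock_mem; rewrite (cover_partition hP) inE. Qed.

Lemma bip_two (R : realDomainType) (V : finType) (w : V -> V -> R) P x y z :
  valid_bipartition w P -> ~~ same_part P x y -> ~~ same_part P x z ->
  same_part P y z.
Proof.
case=> [[hP _ _ _] h2] nxy nxz; apply/negPn/negP => nyz.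
have: (#|[set pblock P x; pblock P y; pblock P z]| <= #|P|)%N.
  apply: subset_leq_card; apply/subsetP => B.
  by rewrite !inE => /orP [/orP [] | ] /eqP ->; apply: own_mem.
rewrite h2 setUC !cardsU1 cards1 !inE.
by move: nxy nxz nyz; rewrite /same_part (eq_sym (pblock P z)) (eq_sym (pblock P z)) => /negbTE -> /negbTE -> /negbTE ->.
Qed.

Lemma refine_same (V : finType) (C P : {set {set V}}) x y :
  partition C [set: V] -> partition P [set: V] -> refines C P ->
  same_part C x y -> same_part P x y.
Proof.
move=> hC hP ref sxy.
have [Bp BpP sub] := ref _ (own_mem x hC).
have tP := partition_trivIset hP.
have xB : x \in Bp by apply: (subsetP sub); apply: in_own.
have yB : y \in Bp.
  by apply: (subsetP sub); move/eqP: sxy => ->; apply: in_own.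
by rewrite /same_part (def_pblock tP BpP xB) (def_pblock tP BpP yB).
Qed.

Unset Implicit Arguments. Set Strict Implicit.
Theorem lemma1 (R : realDomainType) (V : finType) (w : V -> V -> R)
  (w_sym : forall x y, w x y = w y x) (w_ge0 : forall x y, 0 <= w x y)
  (C : {set {set V}}) (hC : minimal_valid_partition w C)
  (ym y1 y2 y3 : V) (hclaw : claw w C ym y1 y2 y3)
  (rep : {set V} -> V) (hrep : forall X, X \in C -> rep X \in X)
  (hrepm : rep (pblock C ym) = ym) (hrep1 : rep (pblock C y1) = y1)
  (hrep2 : rep (pblock C y2) = y2) (hrep3 : rep (pblock C y3) = y3)
  (K : {set V})
  (hK : light_clique w (w y1 ym) [set rep X | X in C] y1 y2 y3 K)
  (hKmax : forall K', light_clique w (w y1 ym) [set rep X | X in C] y1 y2 y3 K' ->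
                      (#|K'| <= #|K|)%N) :
  (exists P, valid_bipartition w P) <->
  (exists2 y, y \in K &
     valid_partition w [set pblock C y; cover (C :\ pblock C y)]).
Proof.
have [hCv hCmin] := hC.
have [hCp hC1 hCi hCii] := hCv.
have tC := partition_trivIset hCp.
set W := w y1 ym in hK hKmax *.
have [Ksub y1K y2K y3K Kl] := hK.
split; last first.
  case=> y yK hv; exists [set pblock C y; cover (C :\ pblock C y)]; split => //.
  have [_ h1 _ _] := hv; move: h1; rewrite cards2.
  by case: (_ != _).
case=> P hPb.
have [hPv hP2] := hPb.
have [hP hP1 hPi hPii] := hPv.
have tP := partition_trivIset hP.
have refCP := hCmin P hPv.
have main : forall p q, p \in K -> q \in K -> p != q -> ym != p -> ym != q ->
    same_part P ym p -> same_part P ym q -> w ym p = W -> w p q < W ->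
    ~~ same_part C ym p ->
    exists2 y, y \in K &
     valid_partition w [set pblock C y; cover (C :\ pblock C y)].
  move=> p q pK qK npq nmp nmq sp sq ewp lpq nCmp.
  have nsA : forall b a, ~~ same_part P ym b -> same_part P ym a ->
      ~~ same_part P b a.
    move=> b a nb sa; apply/negP => sba; move/negP: nb; apply.
    by apply: sp_trans sa _; rewrite sp_sym.
  have neqA : forall b a, ~~ same_part P ym b -> same_part P ym a -> b != a.
    move=> b a nb sa; apply/eqP => eba; move: nb; by rewrite eba sa.
  have hF3 : forall b a c, ~~ same_part P ym b -> same_part P ym a ->
      same_part P ym c -> a != c -> w b a <= w a c.
    move=> b a c nb sa sc nac.
    apply: (valid_ultra w_sym hPv (neqA _ _ nb sa) (neqA _ _ nb sc) nac _
      (nsA _ _ nb sa)).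
    by apply: sp_trans sc; rewrite sp_sym.
  have lbp : forall b, ~~ same_part P ym b -> w b p < W.
    by move=> b nb; apply: le_lt_trans lpq; apply: hF3.
  have Wb : forall b, ~~ same_part P ym b -> W <= w ym b.
    move=> b nb; rewrite leNgt; apply/negP => lt.
    have nmb : ym != b by rewrite eq_sym; apply: neqA nb (sp_refl _ _).
    have npb : p != b by rewrite eq_sym; apply: neqA nb sp.
    have := hCi ym p b nmp nmb npb.
    rewrite gt_max ewp lt (w_sym p b) lbp // => /(_ isT).
    by rewrite (negbTE nCmp).
  have same : forall b b', ~~ same_part P ym b -> ~~ same_part P ym b' ->
      same_part C b b'.
    move=> b b' nb nb'.
    have [->|nbb] := eqVneq b b'; first exact: sp_refl.
    have sbb : same_part P b b' := bip_two hPb nb nb'.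
    have nmb : ym != b by rewrite eq_sym; apply: neqA nb (sp_refl _ _).
    have le1 : w ym b <= w b b'.
      apply: (valid_ultra w_sym hPv nmb _ nbb sbb).
        by rewrite eq_sym; apply: neqA nb' (sp_refl _ _).
      by rewrite sp_sym; apply: nsA nb (sp_refl _ _).
    have le2 : W <= w b b' := le_trans (Wb b nb) le1.
    have := hCi b b' p nbb (neqA _ _ nb sp) (neqA _ _ nb' sp).
    rewrite gt_max (lt_le_trans (lbp _ nb) le2) (lt_le_trans (lbp _ nb') le2).
    by move=> /(_ isT) /orP [] /andP [].
  have [b0 nb0] : exists b0, ~~ same_part P ym b0.
    have AP := own_mem ym hP.
    have [Z ZP nZA] : exists2 Z, Z \in P & Z != pblock P ym.
      move/eqP: hP2 => /cards2P [X [Y [nXY PE]]].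
      have : pblock P ym \in [set X; Y] by rewrite -PE.
      rewrite !inE => /orP [] /eqP AE.
        exists Y; first by rewrite PE !inE eqxx orbT.
        by rewrite AE eq_sym.
      exists X; first by rewrite PE !inE eqxx.
      by rewrite AE.
    have [b0 b0Z] := set0Pn _ (partition_neq0 hP ZP).
    exists b0; rewrite /same_part (def_pblock tP ZP b0Z) eq_sym; exact: nZA.
  set B := pblock C b0.
  have BC : B \in C := own_mem b0 hCp.
  have memB : forall x, (x \in B) = ~~ same_part P ym x.
    move=> x; apply/idP/idP.
      move=> xB; have pxB : pblock C x = B := same_pblock tC xB.
      have : same_part P x b0 by apply: (refine_same hCp hP refCP); rewrite /same_part pxB.
      move=> sxb; apply/negP => smx; move/negP: nb0; apply.
      exact: sp_trans smx sxb.
    move=> nx; have := same _ _ nb0 nx; rewrite /B /same_part => /eqP ->.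
    exact: in_own.
  have inpb : forall x y, (y \in pblock P x) = same_part P x y.
    move=> x y; rewrite /same_part eq_pblock // (cover_partition hP) inE //.
  have pb0 : pblock P b0 = B.
    apply/setP => x; rewrite memB inpb; apply/idP/idP.
      move=> sbx; apply/negP => smx; move/negP: nb0; apply.
      by apply: sp_trans smx _; rewrite sp_sym.
    by move=> nx; apply: bip_two hPb nb0 nx.
  have pym : pblock P ym = cover (C :\ B).
    apply/setP => x; rewrite coverD1 // (cover_partition hCp) !inE memB negbK andbT.
    exact: inpb.
  have PEq : P = [set B; cover (C :\ B)].
    apply/esym/eqP; rewrite eqEcard; apply/andP; split.
      apply/subsetP => Z; rewrite !inE => /orP [] /eqP ->.
      by rewrite -pb0; apply: own_mem.
    by have := own_mem ym hP; rewrite pym.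
    rewrite hP2 cards2; move: nb0; rewrite /same_part pb0 pym eq_sym.
    by case: (_ == _).
  have yB : rep B \in B := hrep B BC.
  have pyB : pblock C (rep B) = B := def_pblock tC BC yB.
  exists (rep B); last by rewrite pyB -PEq.
  apply/negPn/negP => nyK.
  have yK_light : forall a, a \in K -> a != rep B -> w (rep B) a < W.
    move=> a aK nay.
    have [X XC aX] := imsetP (subsetP Ksub a aK).
    have ny : ~~ same_part P ym (rep B) by rewrite -memB.
    case sa: (same_part P ym a).
      have [eap|nap] := eqVneq a p.
        by rewrite eap; apply: le_lt_trans lpq; apply: hF3 ny sp sq npq.
      apply: le_lt_trans (hF3 _ _ _ ny sa sp nap) _; exact: Kl.
    have aB : a \in B by rewrite memB sa.
    have aXX : a \in X by rewrite aX; apply: hrep.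
    have XB : X = B by rewrite -(def_pblock tC XC aXX) (def_pblock tC BC aB).
    by move: nay; rewrite aX XB eqxx.
  suff /hKmax : light_clique w W [set rep X | X in C] y1 y2 y3 (rep B |: K).
    by rewrite cardsU1 nyK add1n ltnn.
  split.
  - apply/subsetP => x; rewrite !inE => /orP [/eqP ->|xK].
      exact: imset_f.
    exact: (subsetP Ksub).
  - by rewrite !inE y1K orbT.
  - by rewrite !inE y2K orbT.
  - by rewrite !inE y3K orbT.
  move=> a b; rewrite !inE => /orP [/eqP ->|aK] /orP [/eqP ->|bK] nab.
  - by rewrite eqxx in nab.
  - by apply: yK_light bK _; rewrite eq_sym.
  - by rewrite w_sym; apply: yK_light aK nab.
  - exact: Kl.
case: hclaw => huniq [e1 [e2 hmax]].
move: huniq; rewrite /= !inE !negb_or.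
move=> /and4P [/and3P [nm1 nm2 nm3] /andP [n12 n13] n23 _].
have d : forall x y, pblock C x != pblock C y -> x != y.
  by move=> x y; apply: contraNneq => ->.
have eW1 : w ym y1 = W by rewrite /W w_sym.
have eW2 : w ym y2 = W by rewrite -e1.
have eW3 : w ym y3 = W by rewrite -e2.
move: hmax; rewrite !gt_max eW1 => /and3P [l12 l13 l23].
have step1 : forall s t, s != t -> ym != s -> ym != t -> w ym s = W ->
    w ym t = W -> w s t < W -> ~~ same_part P ym s -> ~~ same_part P ym t ->
    False.
  move=> s t nst nms nmt es et lst ns nt.
  apply: (hPii ym s t nms nmt nst (etrans es (esym et))); first by rewrite et.
  by rewrite (bip_two hPb ns nt) ns.
have nC2 : ~~ same_part C ym y2 by [].
have nC1 : ~~ same_part C ym y1 by [].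
case s1: (same_part P ym y1); case s2: (same_part P ym y2).
- exact: (main y1 y2 y1K y2K (d _ _ n12) (d _ _ nm1) (d _ _ nm2)).
- case s3: (same_part P ym y3).
    exact: (main y1 y3 y1K y3K (d _ _ n13) (d _ _ nm1) (d _ _ nm3)).
  by case: (step1 y2 y3 (d _ _ n23) (d _ _ nm2) (d _ _ nm3) eW2 eW3 l23);
    rewrite ?s2 ?s3.
- case s3: (same_part P ym y3).
    exact: (main y2 y3 y2K y3K (d _ _ n23) (d _ _ nm2) (d _ _ nm3)).
  by case: (step1 y1 y3 (d _ _ n13) (d _ _ nm1) (d _ _ nm3) eW1 eW3 l13);
    rewrite ?s1 ?s3.
- by case: (step1 y1 y2 (d _ _ n12) (d _ _ nm1) (d _ _ nm2) eW1 eW2 l12);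
    rewrite ?s1 ?s2.
Qed.
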